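(* Let $\mathbf H\subset GL_m(\mathbb C)$ be a finite unitary group with generating set $X_{\mathbf H}$ and $\mathbf G=\mathbf H\wr\mathrm{Sym}_n$, with the subgroup sequence, coset leaders, initial vector and generating sets $X_k$ of $\mathbf G_k$ described in the context. Assume the Nearest Neighbors Property holds for $X_{2n-1}$. Let $g\in\mathbf G$. If a received vector lies in the decoding region containing a nearest neighbor of $g^{-1}\mathbf x_0$, then the subgroup decoding algorithm decodes it to a group element whose canonical form as a product of coset leaders differs from that of $g$ in only one factor.
   Context: $\mathbf G$ is the group of $mn\times mn$ block permutation matrices with nonzero blocks in $\mathbf H$. Subgroups: $\mathbf G_0=\{I\}$, $\mathbf G_{2l-1}=(\mathbf H\wr\mathrm{Sym}_l)\oplus\{I_{m(n-l)}\}$ ($1\le l\le n$), $\mathbf G_{2l}=(\mathbf H\wr\mathrm{Sym}_l)\oplus\mathbf H\oplus\{I_{m(n-l-1)}\}$ ($1\le l\le n-1$). Coset leaders: $\operatorname{CL}(\mathbf G_1/\mathbf G_0)=\mathbf G_1$; $\operatorname{CL}(\mathbf G_{2l}/\mathbf G_{2l-1})=\{(1,\dots,1,h,1,\dots,1):h\in\mathbf H\text{ in slot }l+1\}$; $\operatorname{CL}(\mathbf G_{2l+1}/\mathbf G_{2l})=\{(j\ j{+}1\ \cdots\ l{+}1):1\le j\le l+1\}$; every $g$ is uniquely $c_{2n-1}\cdots c_1$ with $c_k\in\operatorname{CL}(\mathbf G_k/\mathbf G_{k-1})$ (canonical form). Initial vector $\mathbf x_0=(u_1\mathbf v_0,\dots,u_n\mathbf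 v_0)$, $\mathbf v_0\in\mathbb C^m$ a unit vector such that the identity is the unique $h\in\mathbf H$ minimizing $\|h\mathbf v_0-\mathbf v_0\|$, reals $0<u_1<\cdots<u_n$, $\|\mathbf x_0\|=1$. Generators: $X_{2l-1}=\{(h,1,\dots,1):h\in X_{\mathbf H}\}\cup\{(1\,2),\dots,(l{-}1\ l)\}$, $X_{2l}=X_{2l-1}\cup\{(1,\dots,1,h,1,\dots,1):h\in\mathbf H\text{ in slot }l+1\}$. $S=\operatorname{Stab}_{\mathbf G}(\mathbf x_0)$; $d_{min}=\min_{a\notin S}\|a\mathbf x_0-\mathbf x_0\|$; nearest neighbors of a codeword $\mathbf u\in\mathbf G\mathbf x_0$ are codewords $\mathbf v$ with $\|\mathbf u-\mathbf v\|=d_{min}$; $N_{\mathbf G}=\{a\in\mathbf G:a\mathbf x_0\text{ is a nearest neighbor of }\mathbf x_0\}$; Nearest Neighbors Property for $X$: $N_{\mathbf G}\subseteq X\cup X^{-1}$. Decoding region $\operatorname{DR}(h)=\{\mathbf x:\|h\mathbf x-\mathbf x_0\|<\|a\mathbf x-\mathbf x_0\|\ \forall a\notin Sh\}$, which contains $h^{-1}\mathbf x_0$. Subgroup decoding algorithm: $\mathbf r_0=\mathbf r$; for $k=1,\dots,2n-1$ choose $d_k\in\operatorname{CL}(\mathbf G_k/\mathbf G_{k-1})$ minimizing $\|a\mathbf r_{k-1}-\mathbf x_0\|$ (ties broken by a fixed ordering), $\mathbf r_k=d_k\mathbf r_{k-1}$; output $d_{2n-1}\cdots d_1$. *)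

(* Defs.v *)
From mathcomp Require Import all_boot all_order all_algebra all_fingroup.
Set Implicit Arguments. Unset Strict Implicit. Unset Printing Implicit Defensive.
Import Order.TTheory GRing.Theory Num.Theory.
Local Open Scope ring_scope.

Section Wreath.
(* C : the complex field (any algebraically closed numeric field, e.g. algC,
   or complex R for a real closed R).  H is given as an abstract finite group
   hT together with a faithful unitary representation rho : hT -> GL_m(C);
   the matrix group is H = rho(hT). *)
Variables (C : numClosedFieldType) (n m : nat) (hT : finGroupType)
          (rho : hT -> 'M[C]_m).

(* An element of G = H wr Sym_n : a block permutation matrix, encoded as a
   pair (s, f) : the block in block-row i is rho (f i), placed in block-column
   s^-1 i (standard permutation-matrix convention: block x_j is moved to
   position s j). *)
Definition elt := ('S_n * {ffun 'I_n -> hT})%type.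
Definition vec := 'I_n -> 'cV[C]_m.

Definition wact (a : elt) (x : vec) : vec :=
  fun i => rho (a.2 i) *m x ((a.1^-1)%g i).

Definition unitary (M : 'M[C]_m) : Prop :=
  M *m (map_mx (fun z => z^*) M)^T = 1%:M.

Definition vnormm (y : 'cV[C]_m) : C := sqrtC (\sum_(j < m) `|y j ord0| ^+ 2).
Definition vnorm (x : vec) : C :=
  sqrtC (\sum_(i < n) \sum_(j < m) `|x i j ord0| ^+ 2).
Definition dist (x y : vec) : C := vnorm (fun i => x i - y i).

Definition one_ffun : {ffun 'I_n -> hT} := [ffun => 1%g].

(* cycle (j j+1 ... l+1), with 0-based J = j-1, L = l *)
Definition is_cycle (s : 'S_n) (J L : nat) : Prop :=
  forall i : 'I_n, val (s i) =
    (if (J <= i < L)%N then i.+1 else if (val i == L) then J else val i).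

(* transposition (i+1 i+2) in 1-based notation, i.e. of 0-based i, i+1 *)
Definition is_adj_transp (s : 'S_n) (i : nat) : Prop :=
  forall p : 'I_n, val (s p) =
    (if val p == i then i.+1 else if val p == i.+1 then i else val p).

(* coset leaders CL(G_k / G_{k-1}), k = 1 .. 2n-1 *)
Definition inCL (k : nat) (a : elt) : Prop :=
  if k == 1%N then a.1 = 1%g /\ (forall i : 'I_n, val i != 0%N -> a.2 i = 1%g)
  else if odd k then
    a.2 = one_ffun /\ exists J, (J <= k./2)%N /\ is_cycle a.1 J k./2
  else (* k = 2l : h in slot l+1, i.e. 0-based index l *)
    a.1 = 1%g /\ (forall i : 'I_n, val i != k./2 -> a.2 i = 1%g).

Definition inX (XH : {set hT}) (a : elt) : Prop :=
  (a.1 = 1%g /\ (exists i0 : 'I_n, val i0 = 0%N /\ a.2 i0 \in XH) /\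
      (forall i : 'I_n, val i != 0%N -> a.2 i = 1%g))
  \/ (a.2 = one_ffun /\ exists i, (i.+1 < n)%N /\ is_adj_transp a.1 i).

Fixpoint wcomp (c : nat -> elt) (k : nat) (x : vec) : vec :=
  match k with
  | 0%N => x
  | k'.+1 => wact (c k'.+1) (wcomp c k' x)
  end.

Variables (v0 : 'cV[C]_m) (u : 'I_n -> C).

Definition x0 : vec := fun i => u i *: v0.

Definition stab (a : elt) : Prop := wact a x0 =1 x0.

Definition inSh (a h : elt) : Prop :=
  exists s, stab s /\ forall x, wact a x =1 wact s (wact h x).

Definition DR (h : elt) (x : vec) : Prop :=
  forall a, ~ inSh a h -> dist (wact h x) x0 < dist (wact a x) x0.

Definition is_dmin (d : C) : Prop :=
  (exists a, ~ stab a /\ dist (wact a x0) x0 = d) /\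
  (forall a, ~ stab a -> d <= dist (wact a x0) x0).

Definition codeword (v : vec) : Prop := exists b, v =1 wact b x0.

Definition nearest_neighbor (w v : vec) : Prop :=
  codeword w /\ codeword v /\ is_dmin (dist w v).

Definition NN_property (X : elt -> Prop) : Prop :=
  forall a, nearest_neighbor x0 (wact a x0) ->
    X a \/ exists b, X b /\ forall x, wact b (wact a x) =1 x.

Definition canonical_form (g : elt) (c : nat -> elt) : Prop :=
  (forall k, (0 < k <= 2 * n - 1)%N -> inCL k (c k)) /\
  forall x, wact g x =1 wcomp c (2 * n - 1) x.

(* the subgroup decoding algorithm, ties broken by the fixed ordering
   given by the injective rank function, produces d_1, ..., d_{2n-1} on r *)
Definition decoding_run (rank : elt -> nat) (r : vec) (d : nat -> elt) : Prop :=
  forall k, (0 < k <= 2 * n - 1)%N ->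
    inCL k (d k) /\
    forall a, inCL k a ->
      dist (wact (d k) (wcomp d k.-1 r)) x0 <= dist (wact a (wcomp d k.-1 r)) x0 /\
      (dist (wact (d k) (wcomp d k.-1 r)) x0 = dist (wact a (wcomp d k.-1 r)) x0 ->
         (rank (d k) <= rank a)%N).

End Wreath.

(* Main.v *)
Require Import Defs.
From mathcomp Require Import all_boot all_order all_algebra all_fingroup.
Import Order.TTheory GRing.Theory Num.Theory.
Local Open Scope ring_scope.
Set Implicit Arguments. Unset Strict Implicit. Unset Printing Implicit Defensive.

Section Grp.
Variables (C : numClosedFieldType) (n m : nat) (hT : finGroupType)
          (rho : hT -> 'M[C]_m).
Hypothesis rho1 : rho 1%g = 1%:M.
Hypothesis rhoM : forall a b, rho (a * b)%g = rho a *m rho b.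

Definition ecomp (a b : elt n hT) : elt n hT :=
  ((b.1 * a.1)%g, [ffun i => (a.2 i * b.2 ((a.1^-1)%g i))%g]).
Definition eid : elt n hT := (1%g, one_ffun n hT).
Definition einv (a : elt n hT) : elt n hT :=
  ((a.1^-1)%g, [ffun i => ((a.2 (a.1 i))^-1)%g]).

Lemma wact_comp a b (x : vec C n m) : wact rho (ecomp a b) x =1 wact rho a (wact rho b x).
Proof.
move=> i; rewrite /wact /= ffunE invMg permM rhoM mulmxA //.
Qed.

Lemma wact_id (x : vec C n m) : wact rho eid x =1 x.
Proof. by move=> i; rewrite /wact /= ffunE rho1 invg1 perm1 mul1mx. Qed.

Lemma ecompV a : ecomp a (einv a) = eid.
Proof.
rewrite /ecomp /einv /eid /=; congr pair; first by rewrite mulVg.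
by apply/ffunP=> i; rewrite !ffunE permKV mulgV.
Qed.

Lemma ecompVl a : ecomp (einv a) a = eid.
Proof.
rewrite /ecomp /einv /eid /=; congr pair; first by rewrite mulgV.
by apply/ffunP=> i; rewrite !ffunE invgK mulVg.
Qed.

Lemma wact_ext a (x y : vec C n m) : x =1 y -> wact rho a x =1 wact rho a y.
Proof. by move=> e i; rewrite /wact e. Qed.

End Grp.
Section Norms.
Variables (C : numClosedFieldType) (n m : nat) (hT : finGroupType)
          (rho : hT -> 'M[C]_m).
Hypothesis rhoU : forall h, unitary (rho h).

Definition nb (y : 'cV[C]_m) : C := \sum_j y j 0 * (y j 0)^*.
Definition nv (x : vec C n m) : C := \sum_i nb (x i).

Lemma nb_ge0 y : 0 <= nb y.
Proof. by apply: sumr_ge0 => j _; apply: mul_conjC_ge0. Qed.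
Lemma nv_ge0 (x : vec C n m) : 0 <= nv x.
Proof. by apply: sumr_ge0 => j _; apply: nb_ge0. Qed.

Lemma vnormE (x : vec C n m) : vnorm x = sqrtC (nv x).
Proof.
by rewrite /vnorm /nv /nb; congr sqrtC; apply: eq_bigr=> i _; apply: eq_bigr=> j _; rewrite normCK.
Qed.

Lemma nb_mx y : nb y = (y^T *m map_mx Num.conj y) 0 0.
Proof. by rewrite mxE; apply: eq_bigr => j _; rewrite !mxE. Qed.

Lemma nb_unitary M y : unitary M -> nb (M *m y) = nb y.
Proof.
rewrite /unitary => HU.
have H1 : (map_mx Num.conj M)^T *m M = 1%:M by apply: mulmx1C.
have H2 : M^T *m map_mx Num.conj M = 1%:M.
  by rewrite -[M^T *m _]trmxK trmx_mul trmxK H1 trmx1.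
rewrite !nb_mx trmx_mul (map_mxM Num.conj) mulmxA -[y^T *m M^T *m _]mulmxA H2 mulmx1.
done.
Qed.

Lemma nv_wact a (x : vec C n m) : nv (wact rho a x) = nv x.
Proof.
rewrite /nv /wact; under eq_bigr => i _ do rewrite nb_unitary //.
by rewrite [RHS](reindex_inj (@perm_inj _ (a.1^-1)%g)).
Qed.

Lemma nv_ext (x y : vec C n m) : x =1 y -> nv x = nv y.
Proof. by move=> e; apply: eq_bigr => i _; rewrite e. Qed.

Lemma vnorm_ext (x y : vec C n m) : x =1 y -> vnorm x = vnorm y.
Proof. by move=> e; rewrite !vnormE (nv_ext e). Qed.

Lemma dist_ext (x x' y y' : vec C n m) : x =1 x' -> y =1 y' -> dist x y = dist x' y'.
Proof. by move=> e1 e2; apply: vnorm_ext => i; rewrite e1 e2. Qed.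

Lemma dist_wact a (x y : vec C n m) : dist (wact rho a x) (wact rho a y) = dist x y.
Proof.
rewrite /dist !vnormE -(nv_wact a (fun i => x i - y i)); congr sqrtC.
by apply: nv_ext => i; rewrite /wact mulmxBr.
Qed.

End Norms.
From mathcomp Require Import ring.
Section Qsec.
Variables (C : numClosedFieldType) (n m : nat) (hT : finGroupType)
          (rho : hT -> 'M[C]_m).
Hypothesis rhoU : forall h, unitary (rho h).
Variables (v0 : 'cV[C]_m) (u : 'I_n -> C).
Hypothesis ureal : forall i, u i \is Num.real.

Definition pb (y w : 'cV[C]_m) : C := \sum_j y j 0 * (w j 0)^*.
Definition qb (y : 'cV[C]_m) : C := pb y v0 + (pb y v0)^*.
Definition Q (z : vec C n m) : C := \sum_i u i * qb (z i).

Lemma nb_sub y w : nb (y - w) = nb y + nb w - (pb y w + (pb y w)^*).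
Proof.
rewrite /nb /pb rmorph_sum -big_split -big_split -sumrB /=; apply: eq_bigr => j _.
rewrite !mxE rmorphB rmorphM /= conjCK; ring.
Qed.

Lemma nv_sub_x0 (z : vec C n m) :
  nv (fun i => z i - x0 v0 u i) = nv z + nv (x0 v0 u) - Q z.
Proof.
rewrite /nv /Q -big_split -sumrB /=; apply: eq_bigr => i _.
rewrite nb_sub /qb; congr (_ - _).
have -> : pb (z i) (x0 v0 u i) = u i * pb (z i) v0.
  rewrite /pb /x0 mulr_sumr; apply: eq_bigr => j _; rewrite mxE rmorphM /= conj_Creal //; ring.
by rewrite rmorphM /= conj_Creal // mulrDr.
Qed.

Lemma dist_x0 (z : vec C n m) : dist z (x0 v0 u) = sqrtC (nv z + nv (x0 v0 u) - Q z).
Proof. by rewrite /dist vnormE nv_sub_x0. Qed.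

Lemma K_ge0 (z : vec C n m) : 0 <= nv z + nv (x0 v0 u) - Q z.
Proof. by rewrite -nv_sub_x0 nv_ge0. Qed.

Lemma dist_le a b (y : vec C n m) :
  (dist (wact rho a y) (x0 v0 u) <= dist (wact rho b y) (x0 v0 u)) =
  (Q (wact rho b y) <= Q (wact rho a y)).
Proof.
rewrite !dist_x0 ler_sqrtC ?nnegrE ?K_ge0 // !nv_wact //.
by rewrite lerD2l lerN2.
Qed.

Lemma dist_lt a b (y : vec C n m) :
  (dist (wact rho a y) (x0 v0 u) < dist (wact rho b y) (x0 v0 u)) =
  (Q (wact rho b y) < Q (wact rho a y)).
Proof.
rewrite !dist_x0 ltr_sqrtC ?nnegrE ?K_ge0 // !nv_wact //.
by rewrite ltrD2l ltrN2.
Qed.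

End Qsec.
Section Rearr.
Variables (C : numClosedFieldType) (n : nat) (u w : 'I_n -> C).
Hypothesis umono : forall i j : 'I_n, (i <= j)%N -> u i <= u j.
Hypothesis wmono : forall i j : 'I_n, (i <= j)%N -> w i <= w j.

Lemma rearr_N N : forall s : 'S_n, (forall i : 'I_n, (N <= i)%N -> s i = i) ->
  \sum_i u i * w (s i) <= \sum_i u i * w i.
Proof.
elim: N => [|N IH] s Hs.
  by rewrite le_eqVlt; apply/orP; left; apply/eqP/eq_bigr => i _; rewrite Hs.
case: (ltnP N n) => [NL|Nn]; last first.
  apply: IH => i Hi; move: (ltn_ord i); rewrite ltnNge (leq_trans Nn Hi) //.
pose L := Ordinal NL.
case: (eqVneq (s L) L) => [sL|sL].
  apply: IH => i Hi; case: (ltnP N i) => [Hi'|Hi']; first by apply: Hs.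
  have -> : i = L by apply/val_inj; apply/eqP; rewrite /= eqn_leq Hi Hi'.
  exact: sL.
pose t := (s^-1)%g L.
have st : s t = L by rewrite permKV.
have tL : t != L by apply: contra_neq sL => e; rewrite -{1}e st.
have tlt : (t < N)%N.
  rewrite ltnNge; apply/negP => Ht; case: (ltnP N t) => [Ht'|Ht'].
    by move: (Hs t Ht'); rewrite st => e; move: tL; rewrite e eqxx.
  by case/negP: tL; apply/eqP/val_inj; apply/eqP; rewrite /= eqn_leq Ht Ht'.
have sLlt : (s L < N)%N.
  rewrite ltnNge; apply/negP => H; case: (ltnP N (s L)) => [H'|H'].
    by move: (Hs _ H') => /perm_inj e; move: sL; rewrite e eqxx.
  by case/negP: sL; apply/eqP/val_inj; apply/eqP; rewrite /= eqn_leq H H'.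
pose tau := tperm t L.
pose s' := (tau * s)%g.
apply: (le_trans _ (IH s' _)); last first.
  move=> i Hi; rewrite permM; case: (eqVneq i L) => [->|iL].
    by rewrite /tau tpermR st.
  have Hi' : (N < i)%N by rewrite ltn_neqAle Hi andbT; apply: contra_neq iL => e; apply/val_inj.
  have it : i != t by apply: contra_ltnN tlt => /eqP <-; exact: ltnW.
  rewrite /tau tpermD 1?eq_sym //; exact: Hs.
rewrite [X in _ <= X](reindex_inj (@perm_inj _ tau)) /=.
under [X in _ <= X]eq_bigr => i _ do rewrite permM [tau (tau i)]tpermK.
rewrite -subr_ge0 -sumrB.
rewrite (bigD1 t) //= (bigD1 L) //=; last by rewrite eq_sym.
rewrite big1; last first.
  move=> i /andP[it iL]; rewrite /tau tpermD 1?eq_sym //; ring.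
rewrite addr0 /tau tpermL tpermR st.
have -> : u L * w L - u t * w L + (u t * w (s L) - u L * w (s L)) =
          (u L - u t) * (w L - w (s L)) by ring.
apply: mulr_ge0; rewrite subr_ge0.
  by apply: umono; exact: ltnW.
by apply: wmono; exact: ltnW.
Qed.

Lemma rearr (s : 'S_n) : \sum_i u i * w (s i) <= \sum_i u i * w i.
Proof. by apply: (rearr_N (N := n)) => i Hi; move: (ltn_ord i); rewrite ltnNge Hi. Qed.

End Rearr.
From mathcomp Require Import zify.

Definition cycv (J L i : nat) : nat := if (J <= i < L)%N then i.+1 else if i == L then J else i.

Section Cyc.
Variable n : nat.
Lemma cycv_lt J L (i : 'I_n) : (J <= L)%N -> (L < n)%N -> (cycv J L i < n)%N.
Proof. move=> H1 H2; have := ltn_ord i; rewrite /cycv; case: ifP; try case: ifP; lia. Qed.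

Lemma cycp_ex J L : (J <= L)%N -> (L < n)%N -> exists s : 'S_n, is_cycle s J L.
Proof.
move=> H1 H2.
pose f := fun i : 'I_n => Ordinal (cycv_lt i H1 H2).
have finj : injective f.
  move=> i j /(congr1 val) /=; rewrite /cycv => e; apply/val_inj => /=.
  by move: e; case: ifP; case: ifP; try case: ifP; try case: ifP; lia.
exists (perm finj) => i; by rewrite permE.
Qed.

Lemma is_cycle_uniq (s s' : 'S_n) J L : is_cycle s J L -> is_cycle s' J L -> s = s'.
Proof. by move=> H H'; apply/permP => i; apply/val_inj; rewrite H H'. Qed.
End Cyc.

Lemma sum_diff1 (C : numDomainType) n (F G : 'I_n -> C) (p : 'I_n) :
  (forall i, i != p -> F i = G i) ->
  (\sum_i F i <= \sum_i G i) = (F p <= G p).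
Proof.
move=> e; rewrite (bigD1 p) //= [X in _ <= X](bigD1 p) //=.
rewrite (eq_bigr (fun i => G i)); first by rewrite lerD2r.
by move=> i /e.
Qed.

Lemma swap_diff (C : numDomainType) n (u w : 'I_n -> C) (s1 s2 : 'S_n) (p1 p2 : 'I_n) :
  p1 != p2 -> s1 p1 = s2 p2 -> s1 p2 = s2 p1 ->
  (forall i, i != p1 -> i != p2 -> s1 i = s2 i) ->
  \sum_i u (s2 i) * w i - \sum_i u (s1 i) * w i =
  (u (s2 p1) - u (s2 p2)) * (w p1 - w p2).
Proof.
move=> p12 e1 e2 e; rewrite -sumrB (bigD1 p1) //= (bigD1 p2) //=; last by rewrite eq_sym.
rewrite big1; last by move=> i /andP[ip1 ip2]; rewrite e // subrr.
rewrite e1 e2 addr0; ring.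
Qed.

Lemma inCL_slot n (hT : finGroupType) k (p : 'I_n) (a : elt n hT) :
  (k = 1%N /\ val p = 0%N \/ ~~ odd k /\ val p = k./2) ->
  inCL k a <-> (a.1 = 1%g /\ forall i : 'I_n, val i != val p -> a.2 i = 1%g).
Proof.
case=> [[-> ->]|[ok ->]]; first by [].
have k1 : k != 1%N by apply: contraNneq ok => ->.
by rewrite /inCL (negbTE k1) (negbTE ok).
Qed.

Lemma inCL_cyc n (hT : finGroupType) k (a : elt n hT) :
  odd k -> k != 1%N ->
  inCL k a <-> (a.2 = one_ffun n hT /\ exists J, (J <= k./2)%N /\ is_cycle a.1 J k./2).
Proof. by move=> ok k1; rewrite /inCL (negbTE k1) ok. Qed.
Section Decode.
Variables (C : numClosedFieldType) (n m : nat) (hT : finGroupType)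
          (rho : hT -> 'M[C]_m).
Hypothesis rho1 : rho 1%g = 1%:M.
Hypothesis rhoM : forall a b, rho (a * b)%g = rho a *m rho b.
Hypothesis rhoU : forall h, unitary (rho h).
Variables (v0 : 'cV[C]_m) (u : 'I_n -> C).
Hypothesis ureal : forall i, u i \is Num.real.
Hypothesis upos : forall i, 0 < u i.
Hypothesis uinc : forall i j : 'I_n, (i < j)%N -> u i < u j.
Variables (rank : elt n hT -> nat) (r : vec C n m) (d : nat -> elt n hT).
Hypothesis Hrun : decoding_run rho v0 u rank r d.

Let y k := wcomp rho d k r.
Let QQ := Q v0 u.
Definition Hopt (z : vec C n m) (i : 'I_n) :=
  forall h, qb v0 (rho h *m z i) <= qb v0 (z i).

Lemma umono (i j : 'I_n) : (i <= j)%N -> u i <= u j.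
Proof.
rewrite leq_eqVlt => /orP[/eqP e|/uinc/ltW //].
by have -> : i = j by apply/val_inj.
Qed.

Lemma opt k a : (0 < k <= 2 * n - 1)%N -> inCL k a ->
  QQ (wact rho a (y k.-1)) <= QQ (y k).
Proof.
move=> Hk Ha; have [_ H] := Hrun Hk; have [H1 _] := H a Ha.
case: k Hk Ha H H1 => // k' Hk Ha H H1.
by rewrite /QQ -(dist_le rhoU v0 ureal); exact H1.
Qed.

Lemma QQ_diag (f : {ffun 'I_n -> hT}) (z : vec C n m) :
  QQ (wact rho (1%g, f) z) = \sum_i u i * qb v0 (rho (f i) *m z i).
Proof. by apply: eq_bigr => i _; rewrite /wact /= invg1 perm1. Qed.

Lemma slot_step k (p : 'I_n) : (0 < k <= 2 * n - 1)%N ->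
  (k = 1%N /\ val p = 0%N \/ ~~ odd k /\ val p = k./2) ->
  (forall i, i != p -> y k i = y k.-1 i) /\ Hopt (y k) p.
Proof.
case: k => // k Hk Hkp.
have [Hd _] := Hrun Hk.
have [d1 d2] := (inCL_slot (d k.+1) Hkp).1 Hd.
have yk : forall i, y k.+1 i = rho ((d k.+1).2 i) *m y k i.
  by move=> i; rewrite /y /= /wact d1 invg1 perm1.
split.
  move=> i ip; have ne : val i != val p by apply: contra_neq ip => e; apply/val_inj.
  by rewrite yk d2 // rho1 mul1mx.
move=> h.
pose a : elt n hT := (1%g, [ffun i => if i == p then (h * (d k.+1).2 p)%g else 1%g]).
have Ha : inCL k.+1 a.
  apply/(inCL_slot a Hkp); split => // i ip; rewrite ffunE.
  by case: eqP => // e; move: ip; rewrite e eqxx.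
have := opt Hk Ha.
have -> : QQ (y k.+1) = QQ (wact rho (1%g, (d k.+1).2) (y k)).
  by apply: eq_bigr => i _; rewrite yk /wact /= invg1 perm1.
rewrite !QQ_diag (sum_diff1 (p := p)); last first.
  move=> i ip; have ne : val i != val p by apply: contra_neq ip => e; apply/val_inj.
  by rewrite ffunE (negbTE ip) d2.
rewrite ffunE eqxx rhoM -mulmxA ler_pM2l //.
by rewrite yk.
Qed.

Lemma cycE n' (s : 'S_n') J L : is_cycle s J L -> forall i, val (s i) = cycv J L i.
Proof. by []. Qed.
Lemma cycE' n' (s : 'S_n') J L : is_cycle s J L -> forall i, nat_of_ord (s i) = cycv J L i.
Proof. by []. Qed.




Lemma QQ_cyc (s : 'S_n) (z : vec C n m) :
  Q v0 u (wact rho (s, one_ffun n hT) z) = \sum_i u (s i) * qb v0 (z i).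
Proof.
rewrite /Q (reindex_inj (@perm_inj _ s)) /=; apply: eq_bigr => i _.
by rewrite /wact /= ffunE rho1 mul1mx permK.
Qed.

Lemma cyc_step L : (1 <= L)%N -> (L < n)%N ->
  (forall i : 'I_n, (i <= L)%N -> Hopt (y (2 * L)) i) ->
  (forall i j : 'I_n, (i <= j)%N -> (j < L)%N -> qb v0 (y (2 * L) i) <= qb v0 (y (2 * L) j)) ->
  (forall i : 'I_n, (i <= L)%N -> Hopt (y (2 * L).+1) i) /\
  (forall i j : 'I_n, (i <= j <= L)%N -> qb v0 (y (2 * L).+1 i) <= qb v0 (y (2 * L).+1 j)).
Proof.
move=> L1 Ln Hop Hso.
have Hk : (0 < (2 * L).+1 <= 2 * n - 1)%N by lia.
have [Hd Hmin] := Hrun Hk.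
have ok : odd (2 * L).+1 by lia.
have k1 : (2 * L).+1 != 1%N by lia.
have kh : ((2 * L).+1)./2 = L by lia.
have [d2 [J [JL Hs]]] := (inCL_cyc (d (2 * L).+1) ok k1).1 Hd.
rewrite kh in JL Hs.
set sg := (d (2 * L).+1).1 in Hs.
set z := y (2 * L).
set w := fun i => qb v0 (z i).
have z'E : forall p, y (2 * L).+1 p = z ((sg^-1)%g p).
  by move=> p; rewrite /y /= /wact d2 ffunE rho1 mul1mx.
have optK : forall K (s : 'S_n), (K <= L)%N -> is_cycle s K L ->
    \sum_i u (s i) * w i <= \sum_i u (sg i) * w i.
  move=> K s KL Hs'.
  have Ha : inCL (2 * L).+1 (s, one_ffun n hT).
    by apply/(inCL_cyc _ ok k1); split => //; exists K; rewrite kh.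
  have := opt Hk Ha.
  rewrite /QQ /= -/z QQ_cyc.
  have -> : Q v0 u (y (2 * L).+1) = Q v0 u (wact rho (sg, one_ffun n hT) z).
    by apply: eq_bigr => i _; rewrite z'E /wact /= ffunE rho1 mul1mx.
  by rewrite QQ_cyc.
have oL : (L < n)%N by [].
pose oLo := Ordinal oL.
have c1 : forall (Jm : 'I_n), val Jm = J.-1 -> (0 < J)%N -> w Jm <= w oLo.
  move=> Jm eJm J0.
  have [s1 Hs1] := cycp_ex (n := n) (J := J.-1) (leq_trans (leq_pred J) JL) Ln.
  have := optK _ _ (leq_trans (leq_pred J) JL) Hs1.
  rewrite -subr_ge0 (swap_diff u w (p1 := oLo) (p2 := Jm)).
  - rewrite pmulr_rge0 ?subr_ge0 // subr_gt0; apply: uinc.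
    by rewrite /= ?(cycE' Hs) ?(cycE' Hs1) ?(cycE Hs) ?(cycE Hs1) /= eJm /cycv; case: ifP; try case: ifP; try case: ifP; try case: ifP; lia.
  - by apply/eqP => /(congr1 val) /=; rewrite eJm; lia.
  - by apply/val_inj; rewrite /= ?(cycE' Hs) ?(cycE' Hs1) ?(cycE Hs) ?(cycE Hs1) /= eJm /cycv; case: ifP; try case: ifP; try case: ifP; try case: ifP; lia.
  - by apply/val_inj; rewrite /= ?(cycE' Hs) ?(cycE' Hs1) ?(cycE Hs) ?(cycE Hs1) /= eJm /cycv; case: ifP; try case: ifP; try case: ifP; try case: ifP; lia.
  move=> i iL iJ; apply/val_inj; rewrite /= ?(cycE' Hs) ?(cycE' Hs1) ?(cycE Hs) ?(cycE Hs1).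
  have iL' : nat_of_ord i != L by apply: contra_neq iL => e; apply/val_inj.
  have iJ' : nat_of_ord i != J.-1 by apply: contra_neq iJ => e; apply/val_inj; rewrite eJm; exact: e.
  move: iL' iJ'; rewrite /cycv; case: ifP; try case: ifP; try case: ifP; try case: ifP; lia.
have c2 : forall (Jo : 'I_n), val Jo = J -> (J < L)%N -> w oLo <= w Jo.
  move=> Jo eJo JL'.
  have [s1 Hs1] := cycp_ex (n := n) (J := J.+1) JL' Ln.
  have := optK _ _ JL' Hs1.
  rewrite -subr_ge0 (swap_diff u w (p1 := oLo) (p2 := Jo)).
  - rewrite nmulr_rge0 ?subr_le0 // subr_lt0; apply: uinc.
    by rewrite /= ?(cycE' Hs) ?(cycE' Hs1) ?(cycE Hs) ?(cycE Hs1) /= eJo /cycv; case: ifP; try case: ifP; try case: ifP; try case: ifP; lia.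
  - by apply/eqP => /(congr1 val) /=; rewrite eJo; lia.
  - by apply/val_inj; rewrite /= ?(cycE' Hs) ?(cycE' Hs1) ?(cycE Hs) ?(cycE Hs1) /= eJo /cycv; case: ifP; try case: ifP; try case: ifP; try case: ifP; lia.
  - by apply/val_inj; rewrite /= ?(cycE' Hs) ?(cycE' Hs1) ?(cycE Hs) ?(cycE Hs1) /= eJo /cycv; case: ifP; try case: ifP; try case: ifP; try case: ifP; lia.
  move=> i iL iJ; apply/val_inj; rewrite /= ?(cycE' Hs) ?(cycE' Hs1) ?(cycE Hs) ?(cycE Hs1).
  have iL' : nat_of_ord i != L by apply: contra_neq iL => e; apply/val_inj.
  have iJ' : nat_of_ord i != J by apply: contra_neq iJ => e; apply/val_inj; rewrite eJo; exact: e.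
  move: iL' iJ'; rewrite /cycv; case: ifP; try case: ifP; try case: ifP; try case: ifP; lia.
have pre : forall p : 'I_n, (p <= L)%N -> ((sg^-1)%g p <= L)%N.
  move=> p pL; have := cycE' Hs ((sg^-1)%g p); rewrite permKV /cycv.
  move: pL; case: ifP; try case: ifP; lia.
split.
  move=> p pL h; rewrite !z'E; exact: Hop (pre p pL) h.
move=> p1 p2 /andP[p12 p2L].
rewrite !z'E.
have i1L := pre p1 (leq_trans p12 p2L).
have i2L := pre p2 p2L.
set i1 := (sg^-1)%g p1 in i1L *.
set i2 := (sg^-1)%g p2 in i2L *.
have e1 : nat_of_ord p1 = cycv J L i1 by rewrite -(cycE' Hs) /i1 permKV.
have e2 : nat_of_ord p2 = cycv J L i2 by rewrite -(cycE' Hs) /i2 permKV.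
rewrite e1 e2 in p12.
have JLn : (J < n)%N by lia.
case: (ltnP i1 L) => [i1lt|i1ge]; case: (ltnP i2 L) => [i2lt|i2ge].
- apply: Hso => //; move: p12; rewrite /cycv; case: ifP; try case: ifP; try case: ifP; try case: ifP; lia.
- have -> : i2 = oLo by apply/val_inj => /=; lia.
  have i1J : (i1 < J)%N by move: p12; rewrite /cycv; case: ifP; try case: ifP; try case: ifP; try case: ifP; lia.
  have Jmn : (J.-1 < n)%N by lia.
  apply: (le_trans _ (c1 (Ordinal Jmn) erefl _)); last by lia.
  apply: Hso => /=; lia.
- have -> : i1 = oLo by apply/val_inj => /=; lia.
  have Ji2 : (J <= i2)%N by move: p12; rewrite /cycv; case: ifP; try case: ifP; try case: ifP; try case: ifP; lia.
  apply: (le_trans (c2 (Ordinal JLn) erefl _)); last by apply: Hso => /=; lia.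
  lia.
- have -> : i1 = i2 by apply/val_inj => /=; lia.
  by [].
Qed.


Lemma inv_all l : (l < n)%N ->
  (forall i : 'I_n, (i <= l)%N -> Hopt (y (2 * l).+1) i) /\
  (forall i j : 'I_n, (i <= j <= l)%N -> qb v0 (y (2 * l).+1 i) <= qb v0 (y (2 * l).+1 j)).
Proof.
elim: l => [|l IH] ln.
  pose p := Ordinal ln.
  have Hk : (0 < 1 <= 2 * n - 1)%N by lia.
  have [_ Hp] := slot_step (k := 1) (p := p) Hk (or_introl (conj erefl erefl)).
  split.
    move=> i i0; have -> : i = p by apply/val_inj => /=; lia.
    exact: Hp.
  move=> i j /andP[ij j0]; have -> : i = j by apply/val_inj => /=; lia.
  by [].
have [IH1 IH2] := IH (ltnW ln).
pose p := Ordinal ln.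
have Hk : (0 < 2 * l.+1 <= 2 * n - 1)%N by lia.
have Hkp : (2 * l.+1 = 1%N /\ val p = 0%N \/ ~~ odd (2 * l.+1) /\ val p = (2 * l.+1)./2).
  by right; split => /=; lia.
have [Heq Hp] := slot_step Hk Hkp.
have km : (2 * l.+1).-1 = (2 * l).+1 by lia.
rewrite km in Heq.
apply: cyc_step => //.
  move=> i il; case: (eqVneq i p) => [->//|ip].
  move=> h; rewrite Heq //; apply: IH1.
  have : nat_of_ord i != l.+1 by apply: contra_neq ip => e; apply/val_inj.
  lia.
move=> i j ij jl.
have ip : i != p by apply/eqP => /(congr1 val) /=; lia.
have jp : j != p by apply/eqP => /(congr1 val) /=; lia.
rewrite !Heq //; apply: IH2; lia.
Qed.

Lemma final_opt : (0 < n)%N -> forall a,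
  QQ (wact rho a (y (2 * n - 1))) <= QQ (y (2 * n - 1)).
Proof.
move=> n0 a.
have nl : (n.-1 < n)%N by lia.
have [H1 H2] := inv_all nl.
have e : (2 * n.-1).+1 = (2 * n - 1)%N by lia.
rewrite e in H1 H2.
set z := y (2 * n - 1) in H1 H2 *.
apply: (le_trans (y := \sum_i u i * qb v0 (z ((a.1^-1)%g i)))).
  apply: ler_sum => i _; apply: ler_wpM2l; first exact: ltW.
  apply: H1; have := ltn_ord ((a.1^-1)%g i); lia.
apply: (rearr (w := fun i => qb v0 (z i))).
  exact: umono.
move=> i j ij; apply: H2; rewrite ij /=; have := ltn_ord j; lia.
Qed.

End Decode.
Section Faith.
Variables (C : numClosedFieldType) (n m : nat) (hT : finGroupType)
          (rho : hT -> 'M[C]_m).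
Hypothesis rho_inj : injective rho.
Hypothesis rhoU : forall h, unitary (rho h).
Hypothesis m0 : (0 < m)%N.

Lemma mx_ext (A B : 'M[C]_m) : (forall y : 'cV[C]_m, A *m y = B *m y) -> A = B.
Proof.
move=> H; apply/matrixP => i j.
have := H (delta_mx j 0); rewrite -!colE => /matrixP/(_ i 0).
by rewrite !mxE.
Qed.

Lemma rho_nz h : exists y : 'cV[C]_m, rho h *m y != 0.
Proof.
exists (col (Ordinal m0) (map_mx Num.conj (rho h))^T).
rewrite colE mulmxA (rhoU h) mul1mx; apply/negP => /eqP/matrixP/(_ (Ordinal m0) 0).
by rewrite !mxE !eqxx /= => /eqP; rewrite oner_eq0.
Qed.

Lemma faithful (a b : elt n hT) :
  (forall x, wact rho a x =1 wact rho b x) -> a = b.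
Proof.
move=> H.
have e1 : forall i, (a.1^-1)%g i = (b.1^-1)%g i.
  move=> i; apply/eqP/negPn/negP => ne.
  have [y Hy] := rho_nz (a.2 i).
  pose x : vec C n m := fun k => if k == (a.1^-1)%g i then y else 0.
  have ne' : ((b.1^-1)%g i == (a.1^-1)%g i) = false by rewrite eq_sym (negbTE ne).
  have := H x i; rewrite /wact /x eqxx ne'.
  by rewrite mulmx0 => e; move: Hy; rewrite e eqxx.
have ep : a.1 = b.1 by apply: invg_inj; apply/permP => i; exact: e1.
have ef : forall i, a.2 i = b.2 i.
  move=> i; apply: rho_inj; apply: mx_ext => y.
  pose x : vec C n m := fun k => if k == (a.1^-1)%g i then y else 0.
  have := H x i; rewrite /wact /x -e1 !eqxx //.
case: a b H ep ef {e1} => [s f] [s' f'] /= _ -> ef.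
by congr pair; apply/ffunP.
Qed.

End Faith.
Section Canon.
Variables (C : numClosedFieldType) (n m : nat) (hT : finGroupType)
          (rho : hT -> 'M[C]_m).
Hypothesis rho1 : rho 1%g = 1%:M.
Hypothesis rhoM : forall a b, rho (a * b)%g = rho a *m rho b.

Fixpoint pprod (c : nat -> elt n hT) (k : nat) : elt n hT :=
  match k with 0 => eid n hT | k'.+1 => ecomp (c k'.+1) (pprod c k') end.

Lemma wact_pprod c k (x : vec C n m) : wact rho (pprod c k) x =1 wcomp rho c k x.
Proof.
elim: k x => [|k IH] x /=; first exact: wact_id.
move=> i; rewrite wact_comp //; apply: wact_ext; exact: IH.
Qed.

Definition cnt (s : 'S_n) (j : 'I_n) := #|[set k : 'I_n | (k < j)%N && (s k < s j)%N]|.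
Definition kof (j : nat) := if j == 0%N then 1%N else (2 * j)%N.

Lemma card_lt J : (J <= n)%N -> #|[set x : 'I_n | (x < J)%N]| = J.
Proof.
move=> Jn.
have -> : [set x : 'I_n | (x < J)%N] = widen_ord Jn @: [set: 'I_J].
  apply/setP => x; rewrite inE; apply/idP/imsetP.
    by move=> xJ; exists (Ordinal xJ) => //; apply/val_inj.
  by case=> y _ ->; rewrite /= ltn_ord.
rewrite card_imset ?cardsT ?card_ord //; move=> x y /(congr1 val) e; exact: val_inj.
Qed.

Lemma fix_range (s : 'S_n) l : (forall i : 'I_n, (l < i)%N -> s i = i) ->
  forall j : 'I_n, (j <= l)%N -> (s j <= l)%N.
Proof.
move=> H j jl; rewrite leqNgt; apply/negP => lt.
have := H _ lt => /perm_inj e; move: jl; rewrite -e; lia.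
Qed.

Lemma canon_inv c : (forall k, (0 < k <= 2 * n - 1)%N -> inCL k (c k)) ->
  forall l, (l < n)%N ->
  (forall i : 'I_n, (l < i)%N -> (pprod c (2 * l).+1).1 i = i /\ (pprod c (2 * l).+1).2 i = 1%g) /\
  (forall j : 'I_n, (j <= l)%N -> (pprod c (2 * l).+1).2 ((pprod c (2 * l).+1).1 j) = (c (kof j)).2 j) /\
  (forall j : 'I_n, (1 <= j <= l)%N -> is_cycle (c (2 * j).+1).1 (cnt (pprod c (2 * l).+1).1 j) j).
Proof.
move=> Hc; elim=> [|l IH] ln.
  have H1 : inCL 1 (c 1%N) by apply: Hc; lia.
  have [c11 c12] := (inCL_slot (c 1%N) (p := Ordinal ln) (or_introl (conj erefl erefl))).1 H1.
  rewrite /= /ecomp /= c11 mulg1; split; [|split].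
  - move=> i i0; rewrite perm1 ffunE invg1 perm1 /eid /one_ffun ffunE mulg1 c12 //=; lia.
  - move=> j j0; rewrite perm1 ffunE invg1 perm1 /eid /one_ffun ffunE mulg1 /kof.
    by have -> : nat_of_ord j == 0%N by lia.
  - move=> j; lia.
have [I1 [I2 I3]] := IH (ltnW ln).
have e2 : (2 * l.+1 = (2 * l).+2)%N by lia.
rewrite e2.
set P := pprod c (2 * l).+1 in I1 I2 I3 *.
set s := P.1 in I1 I2 I3 *.
have sr := fix_range (l := l) (s := s) (fun i H => (I1 i H).1).
pose p := Ordinal ln.
have Hk2 : (0 < (2 * l).+2 <= 2 * n - 1)%N by lia.
have Hkp : ((2 * l).+2 = 1%N /\ val p = 0%N \/ ~~ odd ((2 * l).+2) /\ val p = ((2 * l).+2)./2).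
  by right; split => /=; lia.
have [c21 c22] := (inCL_slot (c (2 * l).+2) Hkp).1 (Hc _ Hk2).
have Hk3 : (0 < (2 * l).+3 <= 2 * n - 1)%N by lia.
have ok : odd (2 * l).+3 by lia.
have k1 : (2 * l).+3 != 1%N by lia.
have kh : ((2 * l).+3)./2 = l.+1 by lia.
have [c31 [J [JL Hs]]] := (inCL_cyc (c (2 * l).+3) ok k1).1 (Hc _ Hk3).
rewrite kh in JL Hs.
set sg := (c (2 * l).+3).1 in Hs.
have pS : forall k, pprod c k.+1 = ecomp (c k.+1) (pprod c k) by [].
have PE1 : forall i, (pprod c (2 * l).+3).1 i = sg (s i).
  by move=> i; rewrite !pS /ecomp -/P c21 mulg1 permM.
have PE2 : forall i, (pprod c (2 * l).+3).2 i =
    ((c (2 * l).+2).2 ((sg^-1)%g i) * P.2 ((sg^-1)%g i))%g.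
  by move=> i; rewrite !pS /ecomp -/P c21 c31 /one_ffun !ffunE mul1g invg1 perm1.
have sgfix : forall x : 'I_n, (l.+1 < x)%N -> sg x = x.
  by move=> x lx; apply/val_inj; rewrite /= (cycE' Hs) /cycv; case: ifP; try case: ifP; lia.
have sgmono : forall x y : 'I_n, (x <= l)%N -> (y <= l)%N -> (sg x < sg y)%N = (x < y)%N.
  move=> x y xl yl; rewrite !(cycE' Hs) /cycv.
  by case: ifP; try case: ifP; try case: ifP; try case: ifP; lia.
split; [|split].
- move=> i li; rewrite PE1 PE2.
  have sgi : (sg^-1)%g i = i by rewrite -{1}(sgfix i li) permK.
  rewrite sgi; have [Is1 Is2] := I1 i (ltnW li).
  rewrite Is1 sgfix // Is2 mulg1 c22 //=; lia.
- move=> j jl; rewrite PE1 PE2 permK.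
  case: (ltnP l j) => [lj|jl'].
    have ej : nat_of_ord j = l.+1 by lia.
    have [Is1 Is2] := I1 j lj.
    rewrite Is1 Is2 mulg1 /kof.
    have -> : (nat_of_ord j == 0%N) = false by lia.
    have -> : (2 * j)%N = (2 * l).+2 by lia.
    by [].
  have sj := sr j jl'.
  rewrite c22 /=; last by lia.
  by rewrite mul1g I2.
- move=> j /andP[j1 jl].
  case: (ltnP l j) => [lj|jl'].
    have ej : nat_of_ord j = l.+1 by lia.
    have -> : ((2 * j).+1 = (2 * l).+3)%N by lia.
    have -> : cnt (pprod c (2 * l).+3).1 j = J.
      rewrite /cnt; transitivity #|[set x : 'I_n | (x < J)%N]|; last by apply: card_lt; lia.
      rewrite -[RHS](card_preimset _ (@perm_inj _ s)); apply: eq_card => k.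
      rewrite !inE !PE1 (I1 j lj).1.
      have -> : nat_of_ord (sg j) = J by rewrite (cycE' Hs) /cycv; case: ifP; try case: ifP; lia.
      case: (ltnP l k) => [lk|kl].
        rewrite (I1 k lk).1.
        have -> : (k < j)%N = false by lia.
        have -> : (k < J)%N = false by lia.
        by [].
      have skl := sr k kl.
      rewrite (cycE' Hs) /cycv.
      by case: ifP; try case: ifP; lia.
    by move: Hs; rewrite -ej.
  have -> : cnt (pprod c (2 * l).+3).1 j = cnt s j.
    rewrite /cnt; apply: eq_card => k; rewrite !inE !PE1.
    case: (ltnP k j) => [kj|//]; rewrite /= sgmono //; last exact: sr.
    by apply: sr; lia.
  by apply: I3; rewrite j1.
Qed.

End Canon.
Lemma pair_eq n (hT : finGroupType) (a b : elt n hT) : a.1 = b.1 -> a.2 = b.2 -> a = b.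
Proof. by case: a b => [? ?] [? ?] /= -> ->. Qed.

Lemma slot_eq n (hT : finGroupType) K (j : 'I_n) (a b : elt n hT) :
  (K = 1%N /\ val j = 0%N \/ ~~ odd K /\ val j = K./2) ->
  inCL K a -> inCL K b -> a.2 j = b.2 j -> a = b.
Proof.
move=> HK Ha Hb e.
have [a1 a2] := (inCL_slot a HK).1 Ha.
have [b1 b2] := (inCL_slot b HK).1 Hb.
apply: pair_eq; first by rewrite a1 b1.
apply/ffunP => i; case: (eqVneq i j) => [->//|ij].
have ij' : val i != val j by apply: contra_neq ij => e'; apply/val_inj.
by rewrite a2 // b2.
Qed.

Lemma cyc_eq n (hT : finGroupType) K J (a b : elt n hT) :
  odd K -> K != 1%N -> inCL K a -> inCL K b ->
  is_cycle a.1 J K./2 -> is_cycle b.1 J K./2 -> a = b.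
Proof.
move=> ok k1 Ha Hb Hsa Hsb.
have [a2 _] := (inCL_cyc a ok k1).1 Ha.
have [b2 _] := (inCL_cyc b ok k1).1 Hb.
apply: pair_eq; last by rewrite a2 b2.
exact: is_cycle_uniq Hsa Hsb.
Qed.

Section Final.
Variables (C : numClosedFieldType) (n m : nat) (hT : finGroupType)
          (rho : hT -> 'M[C]_m).
Hypothesis rho1 : rho 1%g = 1%:M.
Hypothesis rhoM : forall a b, rho (a * b)%g = rho a *m rho b.
Hypothesis rho_inj : injective rho.
Hypothesis rhoU : forall h, unitary (rho h).
Hypothesis m0 : (0 < m)%N.
Hypothesis n0 : (0 < n)%N.

Lemma canon_final (g : elt n hT) c : canonical_form rho g c ->
  (forall j : 'I_n, (c (kof j)).2 j = g.2 (g.1 j)) /\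
  (forall j : 'I_n, (1 <= j)%N -> is_cycle (c (2 * j).+1).1 (cnt g.1 j) j).
Proof.
move=> [Hc Hg].
have eg : g = pprod c (2 * n - 1).
  apply: (faithful rho_inj rhoU m0) => x i.
  by rewrite Hg (wact_pprod rho1 rhoM).
have nl : (n.-1 < n)%N by lia.
have [_ [I2 I3]] := canon_inv Hc nl.
have e : (2 * n.-1).+1 = (2 * n - 1)%N by lia.
rewrite e -eg in I2 I3.
split.
  move=> j; rewrite I2 //; have := ltn_ord j; lia.
move=> j j1; apply: I3; rewrite j1 /=; have := ltn_ord j; lia.
Qed.

Lemma one_diff (XH : {set hT}) (p q x : elt n hT) c c' :
  canonical_form rho p c -> canonical_form rho q c' ->
  inX XH x -> p = ecomp x q ->
  (#|[set k : 'I_(2 * n - 1) | c k.+1 != c' k.+1]| <= 1)%N.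
Proof.
move=> Hp Hq Hx epq.
have [P1 P2] := canon_final Hp.
have [Q1 Q2] := canon_final Hq.
have [Hcp _] := Hp.
have [Hcq _] := Hq.
suff [k0 Hk0] : exists k0 : nat, forall K, (0 < K <= 2 * n - 1)%N -> c K != c' K -> K = k0.
  apply/card_le1P => a; rewrite inE => Ha b; rewrite !inE.
  apply/idP/eqP => [Hb|->//].
  have Ka : (0 < a.+1 <= 2 * n - 1)%N by have := ltn_ord a; lia.
  have Kb : (0 < b.+1 <= 2 * n - 1)%N by have := ltn_ord b; lia.
  have e1 := Hk0 _ Ka Ha; have e2 := Hk0 _ Kb Hb.
  apply/val_inj; move: e1 e2 => /=; lia.
have red : forall (jbad : 'I_n) (slotbad : bool),
    (forall j : 'I_n, j != jbad -> p.2 (p.1 j) = q.2 (q.1 j)) ->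
    (forall j : 'I_n, (1 <= j)%N -> j != jbad -> cnt p.1 j = cnt q.1 j) ->
    (slotbad -> forall j : 'I_n, (1 <= j)%N -> cnt p.1 j = cnt q.1 j) ->
    (~~ slotbad -> forall j : 'I_n, p.2 (p.1 j) = q.2 (q.1 j)) ->
    exists k0 : nat, forall K, (0 < K <= 2 * n - 1)%N -> c K != c' K -> K = k0.
  move=> jbad sb Hs1 Hc1 Hsb Hnsb.
  exists (if sb then kof jbad else (2 * jbad).+1) => K HK.
  have jn : (K./2 < n)%N by lia.
  pose j := Ordinal jn.
  case: (boolP (odd K && (K != 1%N))) => [/andP[ok k1]|].
    have Kj : (K = (2 * j).+1)%N by rewrite /=; lia.
    have j1 : (1 <= j)%N by rewrite /=; lia.
    case: (eqVneq j jbad) => [ej|nj].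
      case: sb Hsb {Hnsb} => [Hsb|_].
        move=> /negP []; apply/eqP; apply: (cyc_eq ok k1 (Hcp _ HK) (Hcq _ HK) (J := cnt p.1 j)).
          by rewrite {1}Kj; apply: P2.
        by rewrite Hsb // {1}Kj; apply: Q2.
      by rewrite -ej.
    move=> /negP []; apply/eqP; apply: (cyc_eq ok k1 (Hcp _ HK) (Hcq _ HK) (J := cnt p.1 j)).
      by rewrite {1}Kj; apply: P2.
    by rewrite Hc1 // {1}Kj; apply: Q2.
  rewrite negb_and negbK => HK'.
  have HKj : (K = 1%N /\ val j = 0%N \/ ~~ odd K /\ val j = K./2).
    case: (eqVneq K 1%N) => [eK|k1]; first by left; split => //; rewrite /= eK.
    by right; split => //; move: HK'; rewrite (negbTE k1) orbF.
  have Kkof : K = kof j by rewrite /kof /=; case: ifP; lia.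
  have feq : (c K).2 j = (c' K).2 j -> c K = c' K.
    exact: slot_eq HKj (Hcp _ HK) (Hcq _ HK).
  case: (eqVneq j jbad) => [ej|nj].
    case: sb Hsb Hnsb => [_|_ Hnsb].
      by rewrite Kkof ej.
    move=> /negP []; apply/eqP/feq.
    by rewrite Kkof P1 Q1 Hnsb.
  move=> /negP []; apply/eqP/feq.
  by rewrite Kkof P1 Q1 Hs1.
case: Hx => [[x1 [[i0 [i00 _]] x2]]|[x2 [i [ii Ht]]]].
  have pE1 : p.1 = q.1 by rewrite epq /ecomp /= x1 mulg1.
  have pE2 : forall y, p.2 y = (x.2 y * q.2 y)%g.
    by move=> y; rewrite epq /ecomp /= ffunE x1 invg1 perm1.
  apply: (red ((q.1^-1)%g i0) true).
  - move=> j nj; rewrite pE1 pE2 x2 ?mul1g //.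
    apply: contra_neq nj => e; rewrite -(permK q.1 j); congr ((q.1^-1)%g _).
    by apply/val_inj; rewrite e.
  - by move=> j _ _; rewrite pE1.
  - by move=> _ j _; rewrite pE1.
  - by [].
have pE1 : forall y, p.1 y = x.1 (q.1 y) by move=> y; rewrite epq /ecomp /= permM.
have pE2 : forall y, p.2 y = q.2 ((x.1^-1)%g y).
  by move=> y; rewrite epq /ecomp /= ffunE x2 /one_ffun ffunE mul1g.
have in1 : (i < n)%N by lia.
have in2 : (i.+1 < n)%N by lia.
pose a := (q.1^-1)%g (Ordinal in1).
pose b := (q.1^-1)%g (Ordinal in2).
pose jmax := if (a < b)%N then b else a.
apply: (red jmax false).
- by move=> j _; rewrite pE1 pE2 permK.
- move=> j _ nj; rewrite /cnt; apply: eq_card => k; rewrite !inE !pE1.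
  case: (ltnP k j) => [kj|//] /=.
  rewrite !Ht.
  have qa : nat_of_ord (q.1 a) = i by rewrite /a permKV.
  have qb' : nat_of_ord (q.1 b) = i.+1 by rewrite /b permKV.
  have nbad : ~ ((nat_of_ord (q.1 k) == i) && (nat_of_ord (q.1 j) == i.+1) ||
                 (nat_of_ord (q.1 k) == i.+1) && (nat_of_ord (q.1 j) == i)).
    move=> /orP[/andP[/eqP e1 /eqP e2]|/andP[/eqP e1 /eqP e2]].
      have ka : k = a by apply: (perm_inj (s := q.1)); apply/val_inj; rewrite /= e1 qa.
      have jb : j = b by apply: (perm_inj (s := q.1)); apply/val_inj; rewrite /= e2 qb'.
      move: nj; rewrite /jmax -ka -jb kj eqxx //.
    have kb : k = b by apply: (perm_inj (s := q.1)); apply/val_inj; rewrite /= e1 qb'.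
    have ja : j = a by apply: (perm_inj (s := q.1)); apply/val_inj; rewrite /= e2 qa.
    move: nj; rewrite /jmax -kb -ja ltnNge (ltnW kj) /= eqxx //.
  have nb2 : ~ (nat_of_ord (q.1 k) = i /\ nat_of_ord (q.1 j) = i.+1) /\
             ~ (nat_of_ord (q.1 k) = i.+1 /\ nat_of_ord (q.1 j) = i).
    by split => -[e1 e2]; apply: nbad; rewrite e1 e2 !eqxx ?orbT.
  have vE : forall z : 'I_n, \val z = nat_of_ord z by [].
  rewrite !vE; move: nb2.
  case: ifP; try case: ifP; try case: ifP; try case: ifP; lia.
- by [].
- by move=> _ j; rewrite pE1 pE2 permK.
Qed.

End Final.
From Stdlib Require Import Classical_Prop.

Section Aux.
Variables (C : numClosedFieldType) (n m : nat) (hT : finGroupType)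
          (rho : hT -> 'M[C]_m).
Hypothesis rho1 : rho 1%g = 1%:M.
Hypothesis rhoM : forall a b, rho (a * b)%g = rho a *m rho b.

Lemma wactVK (a : elt n hT) (x : vec C n m) : wact rho (einv a) (wact rho a x) =1 x.
Proof. by move=> i; rewrite -wact_comp // ecompVl wact_id. Qed.
Lemma wactKV (a : elt n hT) (x : vec C n m) : wact rho a (wact rho (einv a) x) =1 x.
Proof. by move=> i; rewrite -wact_comp // ecompV wact_id. Qed.

Lemma dist_ge0 (x y : vec C n m) : 0 <= dist x y.
Proof. by rewrite /dist vnormE sqrtC_ge0 nv_ge0. Qed.

Lemma dist_xx (x : vec C n m) : dist x x = 0.
Proof.
rewrite /dist vnormE /nv big1 ?sqrtC0 // => i _.
by rewrite /nb big1 // => j _; rewrite !mxE subrr mul0r.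
Qed.
End Aux.

Unset Implicit Arguments.

Theorem mainTheorem15
  (C : numClosedFieldType) (n m : nat) (hT : finGroupType)
  (rho : hT -> 'M[C]_m) (XH : {set hT}) (v0 : 'cV[C]_m) (u : 'I_n -> C) :
  (0 < n)%N ->
  (* H = rho(hT) is a finite unitary subgroup of GL_m(C), generated by rho(XH) *)
  injective rho -> rho 1%g = 1%:M ->
  (forall a b, rho (a * b)%g = rho a *m rho b) ->
  (forall h, unitary (rho h)) ->
  <<XH>>%g = [set: hT] ->
  (* initial vector *)
  vnormm v0 = 1 ->
  (forall h, h != 1%g -> vnormm (rho 1%g *m v0 - v0) < vnormm (rho h *m v0 - v0)) ->
  (forall i, 0 < u i) ->
  (forall i j : 'I_n, (i < j)%N -> u i < u j) ->
  vnorm (x0 v0 u) = 1 ->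
  (* Nearest Neighbors Property for X_{2n-1} *)
  NN_property rho v0 u (inX XH) ->
  forall (g : elt n hT) (ginvx0 v r : vec C n m),
    wact rho g ginvx0 =1 x0 v0 u ->           (* ginvx0 = g^-1 x0 *)
    nearest_neighbor rho v0 u ginvx0 v ->
    (exists h, DR rho v0 u h v /\ DR rho v0 u h r) ->
  forall (rank : elt n hT -> nat), injective rank ->
  forall (d : nat -> elt n hT), decoding_run rho v0 u rank r d ->
  forall (out : elt n hT), (forall x, wact rho out x =1 wcomp rho d (2 * n - 1) x) ->
  forall (c c' : nat -> elt n hT),
    canonical_form rho g c -> canonical_form rho out c' ->
    (#|[set k : 'I_(2 * n - 1) | c k.+1 != c' k.+1]| <= 1)%N.
Proof.
move=> n0 rho_inj rho1 rhoM rhoU _ vn0 _ upos uinc _ NN g ginvx0 v r Hg Hnn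
  [h [DRv DRr]] rank _ d Hrun out Hout c c' Hc Hc'.
have m0 : (0 < m)%N.
  rewrite lt0n; apply/negP => /eqP em.
  move: vn0; rewrite /vnormm big1 ?sqrtC0; first by move/eqP; rewrite eq_sym oner_eq0.
  by move=> j _; have := ltn_ord j; lia.
have ureal : forall i, u i \is Num.real by move=> i; apply: gtr0_real.
set X0 := x0 v0 u.
set z := wcomp rho d (2 * n - 1) r.
have ML : forall a, dist (wact rho out r) X0 <= dist (wact rho a r) X0.
  move=> a.
  have e1 : dist (wact rho out r) X0 = dist (wact rho (eid n hT) z) X0.
    by apply: dist_ext => // i; rewrite wact_id // Hout.
  have e2 : dist (wact rho a r) X0 = dist (wact rho (ecomp a (einv out)) z) X0.
    apply: dist_ext => // i; rewrite wact_comp //; apply: wact_ext => j.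
    rewrite -(wactVK rho1 rhoM out r j); apply: wact_ext => k; by rewrite Hout.
  rewrite e1 e2 (dist_le rhoU v0 ureal).
  have -> : Q v0 u (wact rho (eid n hT) z) = Q v0 u z.
    by apply: eq_bigr => i _; rewrite wact_id.
  exact: (final_opt rho1 rhoM rhoU ureal upos uinc Hrun n0).
have [s0 [Hs0 Es0]] : inSh rho v0 u out h.
  apply: NNPP => Hn.
  have := DRr out Hn => /(lt_le_trans)/(_ (ML h)).
  by rewrite ltxx.
have [_ [[bv Hbv] Hdm]] := Hnn.
have hv : wact rho h v =1 X0.
  have [s1 [Hs1 Es1]] : inSh rho v0 u (einv bv) h.
    apply: NNPP => Hn.
    have := DRv (einv bv) Hn.
    have -> : dist (wact rho (einv bv) v) X0 = dist X0 X0.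
      apply: dist_ext => // i; rewrite -(wactVK rho1 rhoM bv X0 i).
      by apply: wact_ext => j; rewrite Hbv.
    by rewrite dist_xx => H; have := le_lt_trans (dist_ge0 _ _) H; rewrite ltxx.
  move=> i.
  rewrite -(wactVK rho1 rhoM s1 (wact rho h v) i).
  transitivity (wact rho (einv s1) X0 i).
    apply: wact_ext => j; rewrite -Es1.
    rewrite -(wactVK rho1 rhoM bv X0 j); apply: wact_ext => k; by rewrite Hbv.
  rewrite -{1}(wactVK rho1 rhoM s1 X0 i); apply: wact_ext => j; by rewrite Hs1.
have outv : wact rho out v =1 X0.
  move=> i; rewrite Es0; transitivity (wact rho s0 X0 i); last exact: Hs0.
  apply: wact_ext; exact: hv.
(* the difference g out^-1 is a nearest neighbor of the identity *)
pose a := ecomp g (einv out).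
have ax0 : wact rho a X0 =1 wact rho g v.
  move=> i; rewrite wact_comp //; apply: wact_ext => j.
  rewrite -(wactVK rho1 rhoM out v j); apply: wact_ext => k; by rewrite outv.
have Hna : nearest_neighbor rho v0 u X0 (wact rho a X0).
  split; first by exists (eid n hT) => i; rewrite wact_id.
  split; first by exists a.
  have -> : dist X0 (wact rho a X0) = dist ginvx0 v.
    rewrite -[RHS](dist_wact rhoU g); apply: dist_ext => i; [by rewrite Hg | exact: ax0].
  exact: Hdm.
have aout : forall x, wact rho a (wact rho out x) =1 wact rho g x.
  move=> x i; rewrite wact_comp //; apply: wact_ext => j; exact: wactVK.
case: (NN a Hna) => [Xa|[b [Xb Hb]]].
  apply: (one_diff rho1 rhoM rho_inj rhoU m0 n0 Hc Hc' Xa).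
  apply: (faithful rho_inj rhoU m0) => x i.
  by rewrite wact_comp // aout.
have -> : [set k : 'I_(2 * n - 1) | c k.+1 != c' k.+1] =
          [set k : 'I_(2 * n - 1) | c' k.+1 != c k.+1].
  by apply/setP => k; rewrite !inE eq_sym.
apply: (one_diff rho1 rhoM rho_inj rhoU m0 n0 Hc' Hc Xb).
apply: (faithful rho_inj rhoU m0) => x i.
rewrite wact_comp // -(Hb (wact rho out x) i); apply: wact_ext => j.
by rewrite aout.
Qed.
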